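(* Let $N\ge 2$ and let $a<b$ be coprime positive integers. Suppose $V\subset S_{b-a}$ is an $N$-dimensional subspace such that $\mu_V(W)\ge b/a$ for every nonzero subspace $W\subset S_{a-1}$. Then $b/a\in\Psi_N$.
   Context: Over $\mathbb{C}$, $S_a$ denotes the space of polynomials in one variable $u$ of degree at most $a$. For subspaces $V,W$, $V\cdot W$ is the span of products, and $\mu_V(W)=\dim(V\cdot W)/\dim W$. Define $\theta(x)=N-x^{-1}$ with $\theta(\infty)=N$, $\psi_N=\frac{N+\sqrt{N^2-4}}{2}$, and $\Psi_N=\{\alpha\in\mathbb{Q}:1<\alpha<\psi_N\}\cup\{\theta^i(\infty):i\ge 0\}$. *)

(* Defs.v *)
From HB Require Import structures.
From mathcomp Require Import all_boot all_order all_algebra all_field.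
Set Implicit Arguments. Unset Strict Implicit. Unset Printing Implicit Defensive.
Import Order.TTheory GRing.Theory Num.Theory.
Local Open Scope ring_scope.

(* Polynomials of degree < n are encoded by their coefficient row vectors
   in 'rV_n; S_a corresponds to 'rV_(a.+1).  A subspace of S_a is the row
   space of a matrix with a.+1 columns (mxalgebra), its dimension is \rank. *)
Definition rowpoly (C : numClosedFieldType) (n : nat) (r : 'rV[C]_n) : {poly C} :=
  \poly_(i < n) (if @insub _ (fun k => k < n)%N 'I_n i is Some j then r 0 j else 0).

Definition polyrow (C : numClosedFieldType) (n : nat) (p : {poly C}) : 'rV[C]_n :=
  \row_(i < n) p`_i.

(* V . W : span of the products v*w, v a row of V, w a row of W;
   the products of spanning vectors span V.W. Encoded with n columns. *)
Definition prodsp (C : numClosedFieldType) (n m1 n1 m2 n2 : nat)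
  (V : 'M[C]_(m1, n1)) (W : 'M[C]_(m2, n2)) : 'M[C]_n :=
  (\sum_(i < m1) \sum_(j < m2)
     <<polyrow n (rowpoly (row i V) * rowpoly (row j W))>>)%MS.

Definition mu (C : numClosedFieldType) (n m1 n1 m2 n2 : nat)
  (V : 'M[C]_(m1, n1)) (W : 'M[C]_(m2, n2)) : rat :=
  (\rank (prodsp n V W))%:R / (\rank W)%:R.

(* theta(x) = N - x^-1 on Q u {oo}, with None standing for oo. *)
Definition theta (N : nat) (x : option rat) : option rat :=
  match x with
  | None => Some N%:R
  | Some q => Some (N%:R - q^-1)
  end.

Definition theta_iter (N i : nat) : option rat := iter i (theta N) None.

Definition psiN (N : nat) : algC := (N%:R + sqrtC (N%:R ^+ 2 - 4)) / 2.

(* Psi_N restricted to its rational (finite) part; membership of q : rat. *)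
Definition inPsi (N : nat) (q : rat) : Prop :=
  (1 < q /\ ratr q < psiN N) \/ exists i : nat, theta_iter N i = Some q.

(* Main.v *)
Require Import Defs.
From HB Require Import structures.
From mathcomp Require Import all_boot all_order all_algebra all_field.
From Stdlib Require Import Lia PeanoNat.
Import Order.TTheory GRing.Theory Num.Theory.
Local Open Scope ring_scope.

Module Helpers.
Set Implicit Arguments. Unset Strict Implicit. Unset Printing Implicit Defensive.


Section Count.
Variables (F : fieldType) (N a b : nat) (Fs : 'I_N -> 'M[F]_(a, b)).

Definition phi (u : 'rV[F]_(a * a + b * b)) : 'rV[F]_(N * (a * b)) :=
  mxvec (\matrix_(i < N) mxvec ((vec_mx (lsubmx u) : 'M_(a, a)) *m Fs i
                                - Fs i *m (vec_mx (rsubmx u) : 'M_(b, b)))).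

Lemma phi_lin : linear phi.
Proof.
move=> k u v; rewrite /phi -linearP; congr mxvec.
apply/matrixP => i j; rewrite !mxE.
rewrite !linearP /= mulmxDl -scalemxAl addrACA -scalerDr linearP.
by rewrite !mxE.
Qed.
HB.instance Definition _ :=
  GRing.isLinear.Build F 'rV_(a * a + b * b) 'rV_(N * (a * b)) *:%R phi phi_lin.

Lemma mxvec_eq0 m n (X : 'M[F]_(m, n)) : mxvec X = 0 -> X = 0.
Proof. by move/(congr1 vec_mx); rewrite mxvecK linear0. Qed.

Lemma count_dim :
  (forall (A : 'M[F]_a) (B : 'M[F]_b), (forall i, A *m Fs i = Fs i *m B) ->
     exists c, A = c%:M /\ B = c%:M) ->
  (a * a + b * b <= N * (a * b) + 1)%N.
Proof.
move=> Hs.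
pose Phi := lin1_mx phi.
have r1 : (\rank (kermx Phi) <= 1)%N.
  pose e1 : 'rV[F]_(a * a + b * b) :=
    row_mx (mxvec (1%:M : 'M[F]_a)) (mxvec (1%:M : 'M[F]_b)).
  apply: leq_trans (rank_leq_row e1).
  apply: mxrankS; apply/row_subP => i.
  pose u := row i (kermx Phi).
  have u0 : phi u = 0.
    by rewrite -mul_rV_lin1 /u -row_mul mulmx_ker row0.
  have comm : forall j, (vec_mx (lsubmx u) : 'M_(a, a)) *m Fs j
                        = Fs j *m (vec_mx (rsubmx u) : 'M_(b, b)).
    move=> j; apply/eqP; rewrite -subr_eq0; apply/eqP.
    move/mxvec_eq0: u0 => /(congr1 (row j)); rewrite rowK row0.
    exact: mxvec_eq0.
  have [c [eA eB]] := Hs _ _ comm.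
  rewrite -/u.
  have -> : u = c *: e1.
    have el : lsubmx u = mxvec (c%:M : 'M[F]_a) by rewrite -eA vec_mxK.
    have er : rsubmx u = mxvec (c%:M : 'M[F]_b) by rewrite -eB vec_mxK.
    rewrite -(hsubmxK u) el er.
    by rewrite /e1 scale_row_mx -!linearZ /= !scalemx1.
  exact: scalemx_sub.
have r2 : (\rank Phi <= N * (a * b))%N := rank_leq_col Phi.
move: r1; rewrite mxrank_ker leq_subLR => h.
apply: leq_trans h _; by rewrite leq_add2r.
Qed.

End Count.


Section Poly.
Variable C : numClosedFieldType.

Lemma rowpolyE n (r : 'rV[C]_n) : rowpoly r = \sum_(k < n) r 0 k *: 'X^k.
Proof.
rewrite /rowpoly poly_def; apply: eq_bigr => k _.
case: insubP => [j _ /val_inj -> //|]; by rewrite ltn_ord.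
Qed.

Definition mulmat n a b (v : 'rV[C]_n) : 'M[C]_(a, b) :=
  \matrix_(k < a) polyrow b ('X^k * rowpoly v).

Lemma prod_row n a b (v : 'rV[C]_n) (w : 'rV[C]_a) :
  polyrow b (rowpoly v * rowpoly w) = w *m mulmat a b v.
Proof.
apply/rowP => j; rewrite !mxE (rowpolyE w) mulr_sumr coef_sum.
apply: eq_bigr => k _; rewrite !mxE -scalerAr coefZ.
by rewrite (mulrC 'X^k).
Qed.

Lemma prodsp_sub n m1 n1 m2 a p (V : 'M[C]_(m1, n1)) (W : 'M[C]_(m2, a))
  (K : 'M[C]_(p, n)) :
  (forall i, (W *m mulmat a n (row i V) <= K)%MS) ->
  (prodsp n V W <= K)%MS.
Proof.
move=> HK; apply/sumsmx_subP => i _; apply/sumsmx_subP => j _.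
rewrite genmxE prod_row -row_mul.
exact: submx_trans (row_sub _ _) (HK i).
Qed.

Lemma ratle (x y z w : nat) : (0 < y)%N -> (0 < w)%N ->
  (x%:R / y%:R <= z%:R / w%:R :> rat) -> (x * w <= z * y)%N.
Proof.
move=> y0 w0; rewrite ler_pdivrMr ?ltr0n // mulrAC ler_pdivlMr ?ltr0n //.
by rewrite -!natrM ler_nat.
Qed.

Lemma hyp_use n1 N a b (V : 'M[C]_(N, n1)) m (W : 'M[C]_(m, a)) p (K : 'M[C]_(p, b)) :
  (0 < a)%N ->
  (forall (m : nat) (W : 'M[C]_(m, a)), (0 < \rank W)%N ->
     b%:R / a%:R <= mu b V W) ->
  (0 < \rank W)%N ->
  (forall i, (W *m mulmat a b (row i V) <= K)%MS) ->
  (b * \rank W <= \rank K * a)%N.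
Proof.
move=> a0 H W0 HK; have := H _ W W0; rewrite /mu => /ratle => /(_ a0 W0) h.
apply: leq_trans h _; rewrite leq_mul2r; apply/orP; right.
exact/mxrankS/prodsp_sub.
Qed.

Lemma rank0E m n (M : 'M[C]_(m, n)) : (\rank M == 0%N) = (M == 0).
Proof. exact: mxrank_eq0. Qed.

Lemma arith1_aux (a b x y : nat) : Peano.le x a -> Peano.le y b ->
  Peano.le (Nat.mul b (Nat.sub a x)) (Nat.mul (Nat.sub b y) a) ->
  Peano.le (Nat.mul b x) (Nat.mul y a) ->
  Nat.mul b (Nat.sub a x) = Nat.mul (Nat.sub b y) a.
Proof.
intros h3 h4 h1 h2.
assert (ek: exists k, a = Nat.add x k) by (exists (Nat.sub a x); lia).
destruct ek as [k ek].
assert (ec: exists c, b = Nat.add y c) by (exists (Nat.sub b y); lia).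
destruct ec as [c ec]. subst a b.
replace (Nat.sub (Nat.add x k) x) with k in * by lia.
replace (Nat.sub (Nat.add y c) y) with c in * by lia.
rewrite ?Nat.mul_add_distr_r ?Nat.mul_add_distr_l in h1, h2 |- *.
lia.
Qed.

Lemma arith2 (b s : nat) : (b <= b - s)%N -> (s <= b)%N -> s = 0%N.
Proof.
rewrite -minusE => /ssrnat.leP h1 /ssrnat.leP h2; lia.
Qed.

Lemma arith3 (a r : nat) : (0 < r)%N -> (a <= a - r)%N -> (0 < a - r)%N -> False.
Proof.
rewrite -minusE => /ssrnat.leP h1 /ssrnat.leP h2 /ssrnat.leP h3; lia.
Qed.

Lemma arith1 (a b x y : nat) : (b * (a - x) <= (b - y) * a)%N ->
  (b * x <= y * a)%N -> (x <= a)%N -> (y <= b)%N ->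
  (b * (a - x) = (b - y) * a)%N.
Proof.
rewrite -!multE -!minusE.
move=> /ssrnat.leP h1 /ssrnat.leP h2 /ssrnat.leP h3 /ssrnat.leP h4.
exact: arith1_aux.
Qed.

Lemma schur n1 N a b (V : 'M[C]_(N, n1)) (A : 'M[C]_a) (B : 'M[C]_b) :
  (0 < a)%N -> coprime a b ->
  (forall (m : nat) (W : 'M[C]_(m, a)), (0 < \rank W)%N ->
     b%:R / a%:R <= mu b V W) ->
  (forall i, A *m mulmat a b (row i V) = mulmat a b (row i V) *m B) ->
  exists c, A = c%:M /\ B = c%:M.
Proof.
move=> a0 cop H comm.
have [l rl]: exists l, root (char_poly A) l.
  by apply/closed_rootP; rewrite size_char_poly eqSS -lt0n.
rewrite -eigenvalue_root_char in rl.
set A' := A - l%:M; set B' := B - l%:M.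
have comm' i : A' *m mulmat a b (row i V) = mulmat a b (row i V) *m B'.
  by rewrite mulmxBl mulmxBr mul_scalar_mx mul_mx_scalar comm.
have k0 : (0 < \rank (kermx A'))%N.
  by rewrite lt0n rank0E.
have h1 := hyp_use (K := kermx B') a0 H k0.
have /h1 {h1} : forall i, (kermx A' *m mulmat a b (row i V) <= kermx B')%MS.
  move=> i; apply/sub_kermxP.
  by rewrite -mulmxA -comm' mulmxA mulmx_ker mul0mx.
rewrite !mxrank_ker => h1.
have rAa : (\rank A' <= a)%N by exact: rank_leq_row.
have sb : (\rank B' <= b)%N by exact: rank_leq_row.
have [rA0|rApos] := eqVneq (\rank A') 0%N.
  move: (rA0) => /eqP; rewrite rank0E subr_eq0 => /eqP eA.
  rewrite rA0 subn0 in h1.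
  have s0 : \rank B' = 0%N.
    move: h1; rewrite leq_mul2r (gtn_eqF a0) /= => h1.
    exact: arith2 h1 sb.
  move: s0 => /eqP; rewrite rank0E subr_eq0 => /eqP eB.
  by exists l.
exfalso.
have rAp : (0 < \rank A')%N by rewrite lt0n.
have kpos : (0 < a - \rank A')%N by rewrite -mxrank_ker.
have h2 := hyp_use (K := B') a0 H rAp.
have /h2 {h2} h2 : forall i, (A' *m mulmat a b (row i V) <= B')%MS.
  by move=> i; rewrite comm' submxMl.
have eq : (b * (a - \rank A') = (b - \rank B') * a)%N.
  exact: arith1 h1 h2 rAa sb.
have : (a %| a - \rank A')%N.
  by rewrite -(Gauss_dvdr _ cop) eq dvdn_mull.
move/dvdn_leq => /(_ kpos) h; exact: arith3 rAp h kpos.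
Qed.

End Poly.


Lemma vieta_step (N a b : nat) : Peano.lt 0 a -> Peano.lt a b ->
  Nat.add (Nat.mul a a) (Nat.mul b b) = Nat.add (Nat.mul N (Nat.mul a b)) 1 ->
  Peano.le b (Nat.mul N a) /\
  (Nat.sub (Nat.mul N a) b = 0%N -> a = 1%N /\ b = N) /\
  (Peano.lt 0 (Nat.sub (Nat.mul N a) b) ->
     Peano.lt (Nat.sub (Nat.mul N a) b) a /\
     Nat.add (Nat.mul (Nat.sub (Nat.mul N a) b) (Nat.sub (Nat.mul N a) b)) (Nat.mul a a)
     = Nat.add (Nat.mul N (Nat.mul (Nat.sub (Nat.mul N a) b) a)) 1).
Proof.
intros ha hab e.
assert (hb : Peano.le b (Nat.mul N a)) by nia.
split; [exact hb|].
set (c := Nat.sub (Nat.mul N a) b).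
assert (ec : Nat.add c b = Nat.mul N a) by (unfold c; lia).
clearbody c.
assert (e2 : Nat.add (Nat.mul c b) 1 = Nat.mul a a) by nia.
split.
- intros c0. subst c. simpl in e2. nia.
- intros cp. split; nia.
Qed.

Lemma vieta (N : nat) : forall a b : nat, (0 < a)%N -> (a < b)%N ->
  (a * a + b * b = N * (a * b) + 1)%N ->
  exists i, theta_iter N i = Some (b%:R / a%:R).
Proof.
move=> a; elim/ltn_ind: a => a IH b a0 ab e.
have := @vieta_step N a b (ssrnat.ltP a0) (ssrnat.ltP ab) e.
move=> [hb [h0 h1]].
have ec : (N * a - b + b = N * a)%N by rewrite subnK //; apply/ssrnat.leP.
have [c0|cp] := eqVneq (N * a - b)%N 0%N.
  have [-> ->] := h0 c0.
  by exists 1%N; rewrite /theta_iter /= divr1.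
have cpos : (0 < N * a - b)%N by rewrite lt0n.
have [ca e2] := h1 (ssrnat.ltP cpos).
have ca' : (N * a - b < a)%N by apply/ssrnat.ltP.
have [i Hi] := IH _ ca' a cpos ca' e2.
exists i.+1; rewrite /theta_iter iterS -/(theta_iter N i) Hi /=.
congr Some; rewrite invf_div.
move: ec; set c := (N * a - b)%N => ec.
have a0' : (a%:R : rat) != 0 by rewrite pnatr_eq0 -lt0n.
rewrite -[N%:R](mulfK a0') -natrM -ec natrD mulrDl.
by rewrite [_ / _ + _]addrC addrK.
Qed.

Lemma psi_nat4 (N a b : nat) : Peano.lt 0 a ->
  Peano.lt (Nat.add (Nat.mul a a) (Nat.mul b b)) (Nat.mul N (Nat.mul a b)) ->
  Peano.lt 4 (Nat.mul N N).
Proof.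
intros ha h.
destruct (Nat.le_gt_cases N 2) as [hN|hN]; [|nia].
exfalso.
assert (Peano.le (Nat.mul N (Nat.mul a b)) (Nat.mul 2 (Nat.mul a b))) by (apply Nat.mul_le_mono_r; exact hN).
destruct (Nat.le_gt_cases a b) as [hab|hab].
- set (d := Nat.sub b a) in *. assert (b = Nat.add a d) by (unfold d; lia). clearbody d. subst b. nia.
- set (d := Nat.sub a b) in *. assert (a = Nat.add b d) by (unfold d; lia). clearbody d. subst a. nia.
Qed.
Lemma psi_nat (N a b : nat) : Peano.lt 0 a ->
  Peano.lt (Nat.add (Nat.mul a a) (Nat.mul b b)) (Nat.mul N (Nat.mul a b)) ->
  Peano.lt (Nat.mul N a) (Nat.mul b 2) ->
  Peano.lt (Nat.mul (Nat.sub (Nat.mul b 2) (Nat.mul N a)) (Nat.sub (Nat.mul b 2) (Nat.mul N a)))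
           (Nat.mul (Nat.sub (Nat.mul N N) 4) (Nat.mul a a)).
Proof.
intros ha h1 h2.
assert (h4 := psi_nat4 ha h1).
set (y := Nat.sub (Nat.mul b 2) (Nat.mul N a)).
assert (ey : Nat.add y (Nat.mul N a) = Nat.mul b 2) by (unfold y; lia).
set (M := Nat.sub (Nat.mul N N) 4).
assert (eM : Nat.add M 4 = Nat.mul N N) by (unfold M; lia).
clearbody y M.
assert (H1 : Nat.mul (Nat.add y (Nat.mul N a)) (Nat.add y (Nat.mul N a)) = Nat.mul (Nat.mul b 2) (Nat.mul b 2)) by (rewrite ey; reflexivity).
assert (H2 : Nat.mul (Nat.add M 4) (Nat.mul a a) = Nat.mul (Nat.mul N N) (Nat.mul a a)) by (rewrite eM; reflexivity).
nia.
Qed.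

Lemma psi_bound (N a b : nat) : (0 < a)%N -> (a * a + b * b < N * (a * b))%N ->
  ratr (b%:R / a%:R : rat) < psiN N.
Proof.
move=> a0 h.
have h4 : (4 < N * N)%N.
  by apply/ssrnat.ltP; apply: (psi_nat4 (ssrnat.ltP a0) (ssrnat.ltP h)).
rewrite /psiN fmorph_div !rmorph_nat.
have eD : (N%:R ^+ 2 - 4 : algC) = (N * N - 4)%N%:R.
  by rewrite natrB ?natrM ?expr2 // ltnW.
rewrite eD; set M := (N * N - 4)%N; set s := sqrtC M%:R.
have spos : 0 < s by rewrite sqrtC_gt0 ltr0n subn_gt0.
have aR : (0 : algC) < a%:R by rewrite ltr0n.
rewrite ltr_pdivrMr // mulrAC ltr_pdivlMr ?ltr0n // mulrDl.
have sa : 0 < s * a%:R by rewrite mulr_gt0.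
have e2 : (b%:R * 2 : algC) = (b * 2)%N%:R by rewrite natrM.
rewrite e2 -natrM.
case: (leqP (b * 2) (N * a)) => hb.
  apply: le_lt_trans (_ : _ <= (N * a)%N%:R) _; first by rewrite ler_nat.
  by rewrite ltrDl.
have ey : (b * 2 = (b * 2 - N * a) + N * a)%N by rewrite subnK // ltnW.
rewrite ey natrD addrC ltrD2l.
rewrite -(@ltr_pXn2r _ 2) // ?nnegrE ?ler0n ?(ltW sa) //.
rewrite exprMn sqrtCK -!natrX -natrM ltr_nat.
rewrite !expnS !expn0 !muln1.
apply/ssrnat.ltP; apply: psi_nat.
- exact/ssrnat.ltP.
- exact/ssrnat.ltP.
- exact/ssrnat.ltP.
Qed.

Lemma eq_excl (N a b : nat) : (0 < a)%N -> (a < b)%N -> coprime a b ->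
  (a * a + b * b = N * (a * b))%N -> False.
Proof.
move=> a0 ab cop e.
have h1 : (a %| b * b)%N.
  by rewrite -(dvdn_addr _ (dvdn_mulr a (dvdnn a))) e dvdn_mull // dvdn_mulr.
have h2 : (a %| b)%N by rewrite -(Gauss_dvdr _ cop).
move: cop; rewrite /coprime (gcdn_idPl h2) => /eqP a1; subst a.
have : (b %| 1 * 1 + b * b)%N by rewrite e dvdn_mull // dvdn_mull.
rewrite dvdn_addl; last exact: dvdn_mull (dvdnn b).
rewrite muln1 dvdn1 => /eqP b1.
by rewrite b1 in ab.
Qed.

Lemma arith_final (N a b : nat) : (2 <= N)%N -> (0 < a)%N -> (a < b)%N ->
  coprime a b -> (a * a + b * b <= N * (a * b) + 1)%N ->
  inPsi N (b%:R / a%:R).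
Proof.
move=> N2 a0 ab cop h.
rewrite leq_eqVlt in h; case/orP: h => [/eqP e|h].
  by right; apply: vieta.
rewrite addn1 ltnS leq_eqVlt in h; case/orP: h => [/eqP e|h].
  by exfalso; apply: (eq_excl a0 ab cop e).
left; split; last exact: psi_bound.
rewrite ltr_pdivlMr ?ltr0n // mul1r ltr_nat //.
Qed.

End Helpers.
Import Helpers.

Theorem mainTheorem10 (C : numClosedFieldType) (N a b : nat)
  (V : 'M[C]_(N, (b - a).+1)) :
  (2 <= N)%N -> (0 < a)%N -> (a < b)%N -> coprime a b ->
  \rank V = N ->
  (forall (m : nat) (W : 'M[C]_(m, a)), (0 < \rank W)%N ->
     b%:R / a%:R <= mu b V W) ->
  inPsi N (b%:R / a%:R).
Proof.
move=> N2 a0 ab cop rV H.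
apply: arith_final => //.
apply: (count_dim (Fs := fun i => mulmat a b (row i V))).
move=> A B comm; exact: (schur a0 cop H comm).
Qed.
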